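(* Let $X$ satisfy assumptions (A) described in the context, with Lévy density $\nu$. Let $w\in\mathbb{R}^d$, $r\in(0,2]$, $B=B(w,r)$. Let $f:\mathbb{R}^d\to[0,\infty)$ be measurable with $\int_{\mathbb{R}^d}f(y)(\nu(y)\wedge1)\,dy<\infty$, and for $y\in B$ put $g(y)=\int_{B^c}f(z)\nu(y-z)\,dz$. Then $g$ is bounded on $B(w,r/2)$ and $$|g(y)-g(w)|\le c\,\frac{(g(w)\wedge g(y))\,|y-w|}{r},\qquad y\in B(w,r/2).$$ Also $g(w)\le c\,g(y)$ for $y\in B(w,r/2)$. Here $c$ depends only on $d,a_1,a_2$.
   Context: Assumptions (A): (H0) $X$ is a pure-jump isotropic Lévy process in $\mathbb{R}^d$ whose Lévy measure is infinite with density $\nu(x)=\nu(|x|)$. (H1) $\nu(r)$ is nonincreasing, absolutely continuous, $-\nu'(r)/r$ nonincreasing (with $\nu(r)=-\int_r^\infty\nu'(\rho)d\rho$), and for some $a_1$: $\nu(r)\le a_1\nu(r+1)$ for $r\ge1$, $\nu(r)\le a_1\nu(2r)$ for $0<r\le1$. (H2) There is $a_2$ such that for every $x_0$, $r\in(0,1]$ and every $h\ge0$ on $\mathbb{R}^d$ harmonic in $B(x_0,r)$, $\sup_{B(x_0,r/2)}h\le a_2\inf_{B(x_0,r/2)}h$ (a Borel $f$ is harmonic in open $D$ if $f(x)=E^xf(X_{\tau_B})$, absolutely convergent, for $x\in B$, for all bounded open $B$ with $\overline B\subset D$, $\tau_B=\inf\{t>0:X_t\notin B\}$). Throughout, unspecified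 constants $c$ depend only on $d,a_1,a_2$. *)

(* Defs.v *)
From HB Require Import structures.
From mathcomp Require Import all_boot all_order all_algebra.
From mathcomp Require Import all_classical all_reals all_analysis.

Set Implicit Arguments.
Unset Strict Implicit.
Unset Printing Implicit Defensive.

Import Order.TTheory GRing.Theory Num.Theory.
Local Open Scope classical_set_scope.
Local Open Scope ring_scope.

(* Points of R^d are d.-tuples of reals; d.-tuple R carries the product
   (= Borel) sigma-algebra of mathcomp-analysis. *)
Section Euclid.
Variables (R : realType) (n : nat).
Implicit Types x y : n.-tuple R.

Definition tzero : n.-tuple R := [tuple (0:R) | i < n].
Definition tadd x y : n.-tuple R := [tuple tnth x i + tnth y i | i < n].
Definition tsub x y : n.-tuple R := [tuple tnth x i - tnth y i | i < n].
Definition tdot x y : R := \sum_(i < n) tnth x i * tnth y i.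
Definition tnorm x : R := Num.sqrt (tdot x x).
Definition eball x (r : R) : set (n.-tuple R) := [set y | tnorm (tsub y x) < r].

Definition topen (B : set (n.-tuple R)) :=
  forall x, B x -> exists2 e : R, 0 < e & eball x e `<=` B.
Definition tbounded (B : set (n.-tuple R)) := exists M : R, forall x, B x -> tnorm x <= M.
Definition tclosure (B : set (n.-tuple R)) : set (n.-tuple R) :=
  [set x | forall e : R, 0 < e -> exists2 y, B y & tnorm (tsub x y) < e].
End Euclid.

(* The d-dimensional Lebesgue integral, written as an iterated integral
   (by Tonelli this equals the integral w.r.t. d-dim Lebesgue measure for
   nonnegative measurable integrands, the only ones used below). *)
Fixpoint lebint (R : realType) (n : nat) : (n.-tuple R -> \bar R) -> \bar R :=
  match n return (n.-tuple R -> \bar R) -> \bar R with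
  | 0 => fun F => F [tuple]
  | n'.+1 => fun F =>
      (\int[@lebesgue_measure R]_(x in [set: R])
          lebint (fun t : n'.-tuple R => F (cons_tuple x t)))%E
  end.

Definition levy_dens (R : realType) (n : nat) (nu : R -> R) (y : n.-tuple R) : R :=
  if tnorm y == 0 then 0 else nu (tnorm y).

Definition char_exp (R : realType) (n : nat) (nu : R -> R) (xi : n.-tuple R) : \bar R :=
  lebint (fun y : n.-tuple R => ((1 - cos (tdot xi y)) * levy_dens nu y)%:E).

Section Process.
Context (R : realType) (n : nat) (dO : measure_display) (Omega : measurableType dO)
        (P : probability Omega R) (X : R -> Omega -> n.-tuple R).

(* Pure jump + symmetric Levy measure: the
   characteristic function of X_t - X_s is exp(-(t-s) psi(xi)), with no
   Gaussian part and no drift. *)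
Definition is_levy_density (nu : R -> R) :=
  [/\ (forall r : R, 0 < r -> 0 <= nu r),
      (lebint (fun y : n.-tuple R => (Num.min 1 (tnorm y ^+ 2) * levy_dens nu y)%:E) < +oo)%E
        &
      (lebint (fun y : n.-tuple R => (levy_dens nu y)%:E) = +oo)%E
        ].

Definition cadlag :=
  forall w : Omega,
    (forall t : R, 0 <= t -> forall e : R, 0 < e -> exists2 del : R, 0 < del &
        forall s, t <= s < t + del -> tnorm (tsub (X s w) (X t w)) < e) /\
    (forall t : R, 0 < t -> exists l : n.-tuple R, forall e : R, 0 < e ->
        exists2 del : R, 0 < del &
        forall s, t - del < s < t -> tnorm (tsub (X s w) l) < e).

Definition indep_increments :=
  forall (k : nat) (t : nat -> R) (A : nat -> set (n.-tuple R)),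
    0 <= t 0%N -> (forall i, t i <= t i.+1) -> (forall i, measurable (A i)) ->
    P (\bigcap_(i in `I_k) [set w | A i (tsub (X (t i.+1) w) (X (t i) w))]) =
    (\prod_(i < k) fine (P [set w | A i (tsub (X (t i.+1) w) (X (t i) w))]))%:E.

Definition increments_law (nu : R -> R) :=
  forall (s t : R) (xi : n.-tuple R), 0 <= s -> s <= t ->
    (\int[P]_(w in [set: Omega]) (cos (tdot xi (tsub (X t w) (X s w))))%:E
       = (expR (- ((t - s) * fine (char_exp nu xi))))%:E)%E /\
    (\int[P]_(w in [set: Omega]) (sin (tdot xi (tsub (X t w) (X s w))))%:E = 0)%E.

Definition levy_process (nu : R -> R) :=
  [/\ is_levy_density nu,
      (forall w, X 0 w = @tzero R n),
      (forall t, measurable_fun [set: Omega] (X t)),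
      cadlag /\ indep_increments & increments_law nu].

Definition exit_time (x : n.-tuple R) (B : set (n.-tuple R)) (w : Omega) : \bar R :=
  ereal_inf [set t%:E | t in [set t : R | 0 < t /\ ~ B (tadd x (X t w))]].

(* f(X_{tau_B}) under P^x, with the convention f(cemetery) = 0 on {tau_B = oo} *)
Definition exit_val (f : n.-tuple R -> R) (x : n.-tuple R) (B : set (n.-tuple R))
    (w : Omega) : R :=
  match exit_time x B w with
  | EFin t => f (tadd x (X t w))
  | _ => 0
  end.

Definition harmonic (f : n.-tuple R -> R) (D : set (n.-tuple R)) :=
  measurable_fun [set: n.-tuple R] f /\
  forall B : set (n.-tuple R), topen B -> tbounded B -> tclosure B `<=` D ->
    forall x, B x ->
      (\int[P]_(w in [set: Omega]) (`|exit_val f x B w|)%:E < +oo)%E /\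
      ((f x)%:E = \int[P]_(w in [set: Omega]) (exit_val f x B w)%:E)%E.

(* (H2) scale-invariant Harnack inequality with constant a2
   (sup_{B(x0,r/2)} h <= a2 inf_{B(x0,r/2)} h, written pointwise) *)
Definition harnack (a2 : R) :=
  forall (x0 : n.-tuple R) (r : R), 0 < r <= 1 ->
    forall h : n.-tuple R -> R, (forall x, 0 <= h x) -> harmonic h (eball x0 r) ->
      forall y1 y2, eball x0 (r / 2) y1 -> eball x0 (r / 2) y2 -> h y1 <= a2 * h y2.
End Process.

Definition H1 (R : realType) (nu : R -> R) (a1 : R) :=
  [/\ (forall s t : R, 0 < s -> s <= t -> nu t <= nu s),
      (exists nu' : R -> R,
         (forall r : R, 0 < r ->
            (@lebesgue_measure R).-integrable `]r, +oo[ (fun x => (nu' x)%:E) /\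
            (nu r)%:E = (- \int[@lebesgue_measure R]_(x in `]r, +oo[) (nu' x)%:E)%E) /\
         (forall s t : R, 0 < s -> s <= t -> - nu' t / t <= - nu' s / s)),
      (forall r : R, 1 <= r -> nu r <= a1 * nu (r + 1)) &
      (forall r : R, 0 < r -> r <= 1 -> nu r <= a1 * nu (2 * r))].

Definition assumptionsA (R : realType) (n : nat) (dO : measure_display)
    (Omega : measurableType dO) (P : probability Omega R)
    (X : R -> Omega -> n.-tuple R) (nu : R -> R) (a1 a2 : R) :=
  [/\ levy_process P X nu, H1 nu a1 & harnack P X a2].

Definition gfun (R : realType) (n : nat) (nu : R -> R) (f : n.-tuple R -> R)
    (w : n.-tuple R) (r : R) (y : n.-tuple R) : \bar R :=
  lebint (fun z : n.-tuple R =>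
    (if `[< eball w r z >] then 0 else f z * levy_dens nu (tsub y z))%:E).

(* Main.v *)
From HB Require Import structures.
From mathcomp Require Import all_boot all_order all_algebra.
From mathcomp Require Import all_classical all_reals all_analysis.
From mathcomp Require Import ring lra measurable_realfun.
Require Import Defs.
Import Order.TTheory GRing.Theory Num.Theory.
Local Open Scope classical_set_scope.
Local Open Scope ring_scope.
Set Implicit Arguments.
Unset Strict Implicit.
Unset Printing Implicit Defensive.
Section NormA.
Variables (R : realType) (n : nat).

Definition nrm (u : 'I_n -> R) := Num.sqrt (\sum_i u i * u i).

Lemma sum_sq_ge0 (u : 'I_n -> R) : 0 <= \sum_i u i * u i.
Proof. by apply: sumr_ge0 => i _; rewrite -expr2 sqr_ge0. Qed.

Lemma nrm_ge0 u : 0 <= nrm u.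
Proof. exact: sqrtr_ge0. Qed.

Lemma nrm_sq u : nrm u ^+ 2 = \sum_i u i * u i.
Proof. by rewrite sqr_sqrtr // sum_sq_ge0. Qed.

Lemma CS (u v : 'I_n -> R) : \sum_i u i * v i <= nrm u * nrm v.
Proof.
set A := nrm u; set B := nrm v.
have A0 : 0 <= A by exact: nrm_ge0.
have B0 : 0 <= B by exact: nrm_ge0.
have key : (2 * A * B) * \sum_i u i * v i <= (2 * A * B) * (A * B).
  rewrite mulr_sumr.
  apply: (@le_trans _ _ (\sum_i (B ^+ 2 * (u i * u i) + A ^+ 2 * (v i * v i)))).
    apply: ler_sum => i _.
    have := sqr_ge0 (B * u i - A * v i); nra.
  rewrite big_split /= -!mulr_sumr -nrm_sq -/A -nrm_sq -/B.
  nra.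
have [AB0|] := ltP 0 (A * B).
  have h2 : 0 < 2 * A * B by rewrite -mulrA mulr_gt0.
  by rewrite -(ler_pM2l h2).
rewrite le_eqVlt => /orP [/eqP|]; last first.
  by move=> h; have := mulr_ge0 A0 B0; rewrite leNgt h.
move/eqP; rewrite mulf_eq0 => /orP [] /eqP H.
  have Hs : \sum_i u i * u i = 0.
    by rewrite -nrm_sq -/A H expr0n.
  have := psumr_eq0P (fun i _ => (_ : 0 <= u i * u i)) Hs.
  move=> /(_ _) h.
  rewrite H mul0r big1 // => i _.
  have : u i * u i = 0 by apply: (psumr_eq0P _ Hs) => // j _; rewrite -expr2 sqr_ge0.
  by move/eqP; rewrite mulf_eq0 orbb => /eqP ->; rewrite mul0r.
have Hs : \sum_i v i * v i = 0 by rewrite -nrm_sq -/B H expr0n.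
rewrite H mulr0 big1 // => i _.
have : v i * v i = 0 by apply: (psumr_eq0P _ Hs) => // j _; rewrite -expr2 sqr_ge0.
by move/eqP; rewrite mulf_eq0 orbb => /eqP ->; rewrite mulr0.
Qed.

Lemma nrm_tri (u v : 'I_n -> R) : nrm (fun i => u i + v i) <= nrm u + nrm v.
Proof.
have h1 : 0 <= nrm u + nrm v by rewrite addr_ge0 // nrm_ge0.
rewrite -(ger0_norm h1) -sqrtr_sqr /nrm ler_sqrt; last exact: sqr_ge0.
have -> : \sum_i (u i + v i) * (u i + v i) =
   \sum_i u i * u i + 2 * \sum_i u i * v i + \sum_i v i * v i.
  rewrite mulr_sumr -!big_split /=; apply: eq_bigr => i _; ring.
rewrite -[\sum_i u i * u i]nrm_sq -[\sum_i v i * v i]nrm_sq.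
rewrite !sqrtr_sqr !ger0_norm ?nrm_ge0 //.
have := CS u v; nra.
Qed.

End NormA.

Section NormB.
Variables (R : realType) (n : nat).
Implicit Types x y z : n.-tuple R.

Lemma tnormE x : tnorm x = nrm (tnth x).
Proof. by []. Qed.

Lemma tnorm_ge0 x : 0 <= tnorm x.
Proof. exact: nrm_ge0. Qed.

Lemma tsubE x y i : tnth (tsub x y) i = tnth x i - tnth y i.
Proof. by rewrite /tsub tnth_mktuple. Qed.

Lemma tnorm_subC x y : tnorm (tsub x y) = tnorm (tsub y x).
Proof.
rewrite !tnormE /nrm; congr Num.sqrt; apply: eq_bigr => i _.
rewrite !tsubE; ring.
Qed.

Lemma tnorm_tri x y z : tnorm (tsub x z) <= tnorm (tsub x y) + tnorm (tsub y z).
Proof.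
rewrite !tnormE.
have -> : tnth (tsub x z) = fun i => tnth (tsub x y) i + tnth (tsub y z) i.
  by apply: funext => i; rewrite !tsubE; ring.
exact: nrm_tri.
Qed.

Lemma tsub0 x : tsub x (tzero R n) = x.
Proof.
apply: eq_from_tnth => i; rewrite tsubE /tzero tnth_mktuple; ring.
Qed.

Lemma tnorm_dist x y z :
  `| tnorm (tsub x z) - tnorm (tsub y z) | <= tnorm (tsub x y).
Proof.
have h1 := tnorm_tri x y z.
have h2 := tnorm_tri y x z.
rewrite (tnorm_subC y x) in h2.
rewrite ler_norml; apply/andP; split; lra.
Qed.

End NormB.
Section NuB.
Variables (R : realType) (nu nu' : R -> R) (a1 : R).
Local Notation mu := (@lebesgue_measure R).
Hypothesis nu0 : forall r, 0 < r -> 0 <= nu r.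
Hypothesis numono : forall s t, 0 < s -> s <= t -> nu t <= nu s.
Hypothesis st1 : forall r, 1 <= r -> nu r <= a1 * nu (r + 1).
Hypothesis st2 : forall r, 0 < r -> r <= 1 -> nu r <= a1 * nu (2 * r).
Hypothesis nuint : forall r : R, 0 < r ->
  mu.-integrable `]r, +oo[ (fun x => (nu' x)%:E) /\
  (nu r)%:E = (- \int[mu]_(x in `]r, +oo[) (nu' x)%:E)%E.
Hypothesis nu'mono : forall s t : R, 0 < s -> s <= t -> - nu' t / t <= - nu' s / s.

Lemma nuE r : 0 < r -> nu r = - Rintegral mu `]r, +oo[ nu'.
Proof.
move=> r0; have [_ h] := nuint r0.
by rewrite /Rintegral -fineN -h.
Qed.

Lemma itv_meas a b : a <= b -> mu `]a, b] = (b - a)%:E.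
Proof.
move=> ab; rewrite lebesgue_measure_itv /= lte_fin.
case: ifPn => ba; first by rewrite EFinB.
have -> : a = b by apply/eqP; rewrite eq_le ab /= leNgt.
by rewrite subrr.
Qed.

Lemma cst_int a b k : a <= b -> mu.-integrable `]a, b] (EFin \o cst k).
Proof.
move=> ab; apply: measurable_bounded_integrable => //.
  have H : (mu `]a, b] < +oo)%E by rewrite itv_meas // ltry.
  exact: H.
exact: bounded_cst.
Qed.

Lemma Rint_cst a b k : a <= b -> Rintegral mu `]a, b] (fun _ => k) = k * (b - a).
Proof.
move=> ab; rewrite Rintegral_cst //; congr (_ * _).
exact: (f_equal fine (itv_meas ab)).
Qed.

Lemma nu'_int a b : 0 < a -> a <= b -> mu.-integrable `]a, b] (EFin \o nu').
Proof.
move=> a0 ab; have [h _] := nuint a0.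
apply: integrableS h => //.
by apply: subset_itvl; rewrite bnd_simp.
Qed.

Lemma diffE a b : 0 < a -> a <= b -> nu a - nu b = - Rintegral mu `]a, b] nu'.
Proof.
move=> a0 ab; rewrite (nuE a0) (nuE (lt_le_trans a0 ab)).
have -> : `]a, +oo[%classic = `]a, b] `|` `]b, +oo[.
  by apply: itv_bndbnd_setU; rewrite bnd_simp.
rewrite Rintegral_setU //.
- ring.
- rewrite -itv_bndbnd_setU ?bnd_simp //.
  by have [h _] := nuint a0.
- apply/disj_setPS => x [/=]; rewrite !in_itv /= => /andP[_ xb] /andP[bx _].
  by move: (lt_le_trans bx xb); rewrite ltxx.
Qed.

Lemma upper a b K : 0 < a -> a <= b ->
  (forall u, a < u -> u <= b -> - nu' u <= K) -> nu a - nu b <= K * (b - a).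
Proof.
move=> a0 ab H; rewrite diffE //.
have : Rintegral mu `]a, b] (fun _ => - K) <= Rintegral mu `]a, b] nu'.
  apply: le_Rintegral => //; [exact: cst_int| exact: nu'_int|].
  move=> x /=; rewrite in_itv /= => /andP[ax xb]; have := H x ax xb; lra.
rewrite Rint_cst //; lra.
Qed.

Lemma lower a b k : 0 < a -> a <= b ->
  (forall u, a < u -> u <= b -> k <= - nu' u) -> k * (b - a) <= nu a - nu b.
Proof.
move=> a0 ab H; rewrite diffE //.
have : Rintegral mu `]a, b] nu' <= Rintegral mu `]a, b] (fun _ => - k).
  apply: le_Rintegral => //; [exact: nu'_int| exact: cst_int|].
  move=> x /=; rewrite in_itv /= => /andP[ax xb]; have := H x ax xb; lra.
rewrite Rint_cst //; lra.
Qed.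

Lemma dbound s : 0 < s -> Num.min (s / 2) 1 / 2 * (- nu' s) <= nu (s - Num.min (s / 2) 1).
Proof.
move=> s0; set h := Num.min (s / 2) 1.
have h0 : 0 < h by rewrite lt_min ltr01 andbT divr_gt0.
have hs : h <= s / 2 by rewrite ge_min lexx.
have sh0 : 0 < s - h by lra.
have [X0|Xp] := leP (- nu' s) 0.
  by apply: le_trans (nu0 sh0); rewrite mulr_ge0_le0 // divr_ge0 // ltW.
set q := - nu' s / s.
have q0 : 0 < q by rewrite divr_gt0.
have Xq : - nu' s = q * s by rewrite /q mulrVK // unitfE gt_eqF.
have shs : s - h <= s by lra.
have L := @lower (s - h) s ((s - h) * q) sh0 shs.
have HH : forall u, s - h < u -> u <= s -> (s - h) * q <= - nu' u.
  move=> u hu us; have u0 : 0 < u by lra.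
  have := nu'mono u0 us; rewrite -/q => H.
  have -> : - nu' u = u * (- nu' u / u) by rewrite mulrC mulrVK // unitfE gt_eqF.
  apply: le_trans (_ : u * q <= _); first by rewrite ler_pM2r //; lra.
  by rewrite ler_pM2l.
have ns := nu0 s0.
have := L HH.
have P : 0 <= q * h * (s - h - s / 2).
  by apply: mulr_ge0; [apply: mulr_ge0; apply: ltW | lra].
rewrite Xq; nra.
Qed.

Definition mm (p : R) := Num.min p 1.

Lemma mm_gt0 p : 0 < p -> 0 < mm p.
Proof. by move=> p0; rewrite /mm lt_min p0 ltr01. Qed.

Lemma mm_le p q : p <= q -> mm p <= mm q.
Proof. by move=> pq; rewrite /mm le_min !ge_min pq lexx orbT. Qed.

Lemma step p : 0 < p -> nu p <= `|a1| * nu (p + mm p).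
Proof.
move=> p0; have q0 : 0 < p + mm p by rewrite addr_gt0 // mm_gt0.
apply: le_trans (_ : a1 * nu (p + mm p) <= _); last first.
  by rewrite ler_wpM2r ?nu0 ?ler_norm.
rewrite /mm; case: (leP p 1) => p1.
  by rewrite -mulr2n -mulr_natl; apply: st2.
by apply: st1; rewrite ltW.
Qed.

Lemma chain k p : 0 < p -> nu p <= `|a1| ^+ k * nu (p + k%:R * mm p).
Proof.
move=> p0; elim: k => [|k IH]; first by rewrite expr0 mul1r mul0r addr0.
set q := p + k%:R * mm p.
have mk : 0 <= k%:R * mm p by rewrite mulr_ge0 // ltW // mm_gt0.
have q0 : 0 < q by rewrite /q; lra.
have pq : p <= q by rewrite /q; lra.
apply: le_trans IH _; rewrite exprSr -mulrA; apply: ler_wpM2l => //.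
apply: le_trans (step q0) _; apply: ler_wpM2l => //.
have mk1 : 0 <= k.+1%:R * mm p by rewrite mulr_ge0 // ltW // mm_gt0.
apply: numono; first lra.
rewrite /q mulrSr mulrDl mul1r -addrA lerD2l lerD2l.
exact: mm_le.
Qed.

Lemma chainT k p t : 0 < p -> p <= t -> t <= p + k%:R * mm p ->
  nu p <= `|a1| ^+ k * nu t.
Proof.
move=> p0 pt tp; apply: le_trans (chain k p0) _.
by apply: ler_wpM2l => //; rewrite numono // (lt_le_trans p0).
Qed.

Lemma lip1 r a b : 0 < r -> r <= 2 -> r / 2 <= a -> a <= b -> b <= a + r / 2 ->
  nu a - nu b <= 8 * `|a1| ^+ 3 * nu b / r * (b - a).
Proof.
move=> r0 r2 ra ab br.
have a0 : 0 < a by lra.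
apply: upper => // u au ub.
have u0 : 0 < u by lra.
set h := Num.min (u / 2) 1.
have hu : h <= u / 2 by rewrite ge_min lexx.
have h1 : h <= 1 by rewrite ge_min lexx orbT.
have hr : r / 4 <= h by rewrite le_min; apply/andP; split; lra.
have p0 : 0 < u - h by lra.
have nb : 0 <= nu b by apply: nu0; lra.
have A0 : 0 <= `|a1| ^+ 3 by rewrite exprn_ge0.
have m1 : h <= mm (u - h) by rewrite /mm le_min h1 andbT; lra.
have m2 : r / 4 <= mm (u - h) by rewrite /mm le_min; apply/andP; split; lra.
have C : nu (u - h) <= `|a1| ^+ 3 * nu b.
  apply: (@chainT 3) => //; first lra.
  have -> : (3%:R : R) = 3 by [].
  lra.
have D := dbound u0; rewrite -/h in D.
have [X0|Xp] := leP (- nu' u) 0.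
  by apply: le_trans X0 _; rewrite divr_ge0 ?mulr_ge0 // ltW.
rewrite ler_pdivlMr //.
have E : h / 2 * - nu' u <= `|a1| ^+ 3 * nu b.
  exact: le_trans D C.
nra.
Qed.

Lemma lip r a b (del : R) : 0 < r -> r <= 2 -> r / 2 <= a -> r / 2 <= b ->
  `|a - b| <= del -> del <= r / 2 ->
  nu a <= (1 + 8 * `|a1| ^+ 3 * del / r) * nu b.
Proof.
move=> r0 r2 ra rb abd dr.
have A0 : 0 <= `|a1| ^+ 3 by rewrite exprn_ge0.
have d0 : 0 <= del by apply: le_trans abd.
have K0 : 0 <= 8 * `|a1| ^+ 3 * del / r by rewrite divr_ge0 ?mulr_ge0 // ltW.
have na : 0 <= nu a by apply: nu0; lra.
have nb : 0 <= nu b by apply: nu0; lra.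
set c := 8 * `|a1| ^+ 3 / r.
have c0 : 0 <= c by rewrite /c divr_ge0 ?mulr_ge0 // ltW.
have -> : 8 * `|a1| ^+ 3 * del / r = c * del by rewrite /c; ring.
case: (leP a b) => ab.
  have e1 : b - a <= del by apply: le_trans abd; rewrite distrC ler_norm.
  have bar : b <= a + r / 2 by lra.
  have L := @lip1 r a b r0 r2 ra ab bar.
  have E : 8 * `|a1| ^+ 3 * nu b / r * (b - a) = c * nu b * (b - a).
    by rewrite /c; ring.
  rewrite E in L.
  have : c * nu b * (b - a) <= c * nu b * del.
    by apply: ler_wpM2l => //; rewrite mulr_ge0.
  nra.
apply: le_trans (_ : nu b <= _).
  by apply: numono => //; [lra | exact: ltW].
have : 0 <= c * del by rewrite mulr_ge0.
nra.
Qed.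

End NuB.
Import HBNNSimple.
Local Open Scope ereal_scope.

Lemma mono_int dd (T : measurableType dd) (R : realType) (mu : {measure set T -> \bar R})
  (f g : T -> \bar R) : (forall x, 0 <= f x) -> (forall x, f x <= g x) ->
  \int[mu]_x f x <= \int[mu]_x g x.
Proof.
move=> f0 fg; have g0 : forall x, 0 <= g x by move=> x; exact: le_trans (f0 x) (fg x).
rewrite !ge0_integralTE //; apply: ereal_sup_le => _ [h hf <-].
by exists h => //= x; exact: le_trans (hf x) (fg x).
Qed.

Lemma scale_int dd (T : measurableType dd) (R : realType) (mu : {measure set T -> \bar R})
  (f : T -> \bar R) (k : R) : (0 <= k)%R -> (forall x, 0 <= f x) ->
  \int[mu]_x (k%:E * f x) <= k%:E * \int[mu]_x f x.
Proof.
move=> k0 f0; have [->|kp] := eqVneq k 0%R.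
  rewrite mul0e integral0_eq // => x _; by rewrite mul0e.
have kpos : (0 < k)%R by rewrite lt0r kp.
have ki0 : (0 <= k^-1)%R by rewrite invr_ge0.
rewrite !ge0_integralTE //; last by move=> x; rewrite mule_ge0.
apply: ge_ereal_sup => _ [h hf <-].
pose h' := scale_nnsfun h ki0.
have E : (HBNNSimple.NonNegSimpleFun.sort h) = (cst k \* (HBNNSimple.NonNegSimpleFun.sort h'))%R.
  by apply: funext => x /=; rewrite mulrA mulfV // mul1r.
rewrite E sintegralrM; apply: lee_wpmul2l; first by rewrite lee_fin.
apply: ereal_sup_ubound; exists h' => //= x.
rewrite EFinM; apply: le_trans (lee_wpmul2l _ (hf x)) _; first by rewrite lee_fin.
by rewrite muleA -EFinM mulVf // mul1e.
Qed.

Lemma ae0_int (R : realType) (f g : R -> \bar R) :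
  (forall x, 0 <= f x) -> (forall x, 0 <= g x) -> (forall x, x != 0%R -> f x <= g x) ->
  \int[@lebesgue_measure R]_x f x <= \int[@lebesgue_measure R]_x g x.
Proof.
move=> f0 g0 fg; rewrite [X in X <= _]ge0_integralTE //.
apply: ge_ereal_sup => _ [h hf <-].
have -> : sintegral (@lebesgue_measure R) (HBNNSimple.NonNegSimpleFun.sort h) =
   \int[@lebesgue_measure R]_x (HBNNSimple.NonNegSimpleFun.sort h x)%:E.
  by rewrite integral_nnsfun // patch_setT.
rewrite -(@integral_setD1 _ _ 0%R); last 2 first.
- exact: measurableD.
- apply/measurable_EFinP; apply: measurable_funTS.
  have mh : measurable_fun [set: measurableTypeR R] h by [].
  exact: mh.
rewrite [X in X <= _]integral_mkcond.
apply: le_trans (_ : \int[@lebesgue_measure R]_x (g \_ (setT `\ 0%R)) x <= _).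
  apply: mono_int.
    by move=> x; rewrite /patch; case: ifP => // _; rewrite lee_fin.
  move=> x; rewrite /patch; case: ifPn => // /set_mem [_ /eqP x0].
  exact: le_trans (hf x) (fg x x0).
apply: mono_int.
  by move=> x; rewrite /patch; case: ifP.
by move=> x; rewrite /patch; case: ifP.
Qed.

Lemma lebint_ge0 (R : realType) (n : nat) (F : n.-tuple R -> \bar R) :
  (forall x, 0 <= F x) -> 0 <= lebint F.
Proof.
elim: n F => [|n IH] F F0 /=; first exact: F0.
by apply: integral_ge0 => x _; apply: IH.
Qed.

Lemma lebint_mono (R : realType) (n : nat) (F G : n.-tuple R -> \bar R) :
  (forall x, 0 <= F x) -> (forall x, F x <= G x) -> lebint F <= lebint G.
Proof.
elim: n F G => [|n IH] F G F0 FG /=; first exact: FG.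
apply: mono_int; first by move=> x; apply: lebint_ge0.
by move=> x; apply: IH.
Qed.

Lemma lebint_mono0 (R : realType) (n : nat) (F G : n.+1.-tuple R -> \bar R) :
  (forall x, 0 <= F x) -> (forall x, 0 <= G x) ->
  (forall x, x != tzero R n.+1 -> F x <= G x) -> lebint F <= lebint G.
Proof.
move=> F0 G0 FG /=; apply: ae0_int.
- by move=> x; apply: lebint_ge0.
- by move=> x; apply: lebint_ge0.
move=> x x0; apply: lebint_mono => // t; apply: FG.
apply/negP => /eqP E; move: x0; rewrite -(tnth0 x t).
have -> : [tuple of x :: t] = cons_tuple x t by [].
by rewrite E /tzero tnth_mktuple eqxx.
Qed.

Lemma lebint_scale (R : realType) (n : nat) (F : n.-tuple R -> \bar R) (k : R) :
  (0 <= k)%R -> (forall x, 0 <= F x) ->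
  lebint (fun x => k%:E * F x) <= k%:E * lebint F.
Proof.
move=> k0; elim: n F => [|n IH] F F0 /=; first by [].
apply: le_trans (_ : \int[@lebesgue_measure R]_x (k%:E * lebint (fun t : n.-tuple R => F (cons_tuple x t))) <= _).
  apply: mono_int; last by move=> x; apply: IH.
  by move=> x; apply: lebint_ge0 => t; rewrite mule_ge0.
by apply: scale_int => // x; apply: lebint_ge0.
Qed.
Local Close Scope ereal_scope.
Local Open Scope ring_scope.
Section TnormEq0.
Variables (R : realType) (n : nat).
Lemma tnorm_eq0 (x : n.-tuple R) : tnorm x = 0 -> x = tzero R n.
Proof.
move=> /eqP; rewrite /tnorm sqrtr_eq0 => H.
have S0 : tdot x x = 0.
  apply/eqP; rewrite eq_le H /= /tdot; apply: sumr_ge0 => i _.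
  by rewrite -expr2 sqr_ge0.
apply: eq_from_tnth => i; rewrite /tzero tnth_mktuple.
have : tnth x i * tnth x i = 0.
  by apply: (psumr_eq0P _ S0) => // j _; rewrite -expr2 sqr_ge0.
by move/eqP; rewrite mulf_eq0 orbb => /eqP.
Qed.
End TnormEq0.

Lemma levy_dens_pos (R : realType) (n : nat) (nu : R -> R) (y : n.-tuple R) :
  0 < tnorm y -> levy_dens nu y = nu (tnorm y).
Proof. by move=> h; rewrite /levy_dens gt_eqF. Qed.

Lemma levy_dens_ge0 (R : realType) (n : nat) (nu : R -> R) (y : n.-tuple R) :
  (forall r, 0 < r -> 0 <= nu r) -> 0 <= levy_dens nu y.
Proof.
move=> nu0; rewrite /levy_dens; case: ifPn => // h; apply: nu0.
by rewrite lt_neqAle eq_sym h tnorm_ge0.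
Qed.

Unset Implicit Arguments.

Theorem lemma5p4 (R : realType) (d : nat) (a1 a2 : R) :
  (0 < d)%N ->
  exists c : R,
  forall (dO : measure_display) (Omega : measurableType dO)
         (P : probability Omega R) (X : R -> Omega -> d.-tuple R) (nu : R -> R),
  assumptionsA P X nu a1 a2 ->
  forall (w : d.-tuple R) (r : R), 0 < r <= 2 ->
  forall f : d.-tuple R -> R,
    measurable_fun [set: d.-tuple R] f -> (forall y, 0 <= f y) ->
    (lebint (fun y : d.-tuple R => (f y * Num.min (levy_dens nu y) 1)%:E) < +oo)%E ->
    [/\ (exists M : R, forall y, eball w (r / 2) y -> (gfun nu f w r y <= M%:E)%E),
        (forall y, eball w (r / 2) y ->
           (`| gfun nu f w r y - gfun nu f w r w | <=
              c%:E * mine (gfun nu f w r w) (gfun nu f w r y)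
                   * (tnorm (tsub y w) / r)%:E)%E) &
        (forall y, eball w (r / 2) y ->
           (gfun nu f w r w <= c%:E * gfun nu f w r y)%E)].
Proof.
case: d => [//|d] _.
exists (1 + 8 * `|a1| ^+ 3).
move=> dO Omega P X nu [[[nu0 _ _] _ _ _ _] [numono [nu' [nuint nu'mono]] st1 st2] _].
move=> w r /andP[r0 r2] f mf f0 fint.
have K80 : 0 <= 8 * `|a1| ^+ 3 by rewrite mulr_ge0 // exprn_ge0.
set K8 := 8 * `|a1| ^+ 3 in K80 *.
have Lp : forall y z, eball w (r / 2) y -> ~ eball w r z ->
  [/\ 0 < tnorm (tsub w z), 0 < tnorm (tsub y z),
      nu (tnorm (tsub w z)) <= (1 + K8 * tnorm (tsub y w) / r) * nu (tnorm (tsub y z)) &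
      nu (tnorm (tsub y z)) <= (1 + K8 * tnorm (tsub y w) / r) * nu (tnorm (tsub w z))].
  move=> y z hy hz.
  have ha : r <= tnorm (tsub w z).
    rewrite tnorm_subC leNgt; apply/negP => H; exact: hz H.
  have hy' : tnorm (tsub y w) < r / 2 by exact: hy.
  have hd := tnorm_dist w y z; rewrite (tnorm_subC w y) in hd.
  have hd' := hd; rewrite distrC in hd'.
  move: (hd); rewrite ler_norml => /andP[h1 h2].
  have hb : r / 2 <= tnorm (tsub y z) by lra.
  split; try lra.
  - by apply: (@lip R nu nu' a1) => //; lra.
  - by apply: (@lip R nu nu' a1) => //; lra.
pose Gi (y : d.+1.-tuple R) := fun z : d.+1.-tuple R =>
  ((if `[< eball w r z >] then 0 else f z * levy_dens nu (tsub y z))%:E)%E.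
have GE y : gfun nu f w r y = lebint (Gi y) by [].
have Gi0 y z : (0 <= Gi y z)%E.
  rewrite /Gi lee_fin; case: ifP => // _; rewrite mulr_ge0 //.
  exact: levy_dens_ge0.
have cmp : forall y, eball w (r / 2) y ->
  (lebint (Gi w) <= (1 + K8 * tnorm (tsub y w) / r)%:E * lebint (Gi y))%E /\
  (lebint (Gi y) <= (1 + K8 * tnorm (tsub y w) / r)%:E * lebint (Gi w))%E.
  move=> y hy.
  have k0 : 0 <= 1 + K8 * tnorm (tsub y w) / r.
    by rewrite addr_ge0 // divr_ge0 ?mulr_ge0 ?tnorm_ge0 // ltW.
  split.
  - apply: le_trans (lebint_scale k0 (Gi0 y)).
    apply: lebint_mono => // z; rewrite /Gi; case: asboolP => hz.
      by rewrite mule0.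
    have [p1 p2 c1 c2] := Lp y z hy hz.
    rewrite !levy_dens_pos // -EFinM lee_fin mulrCA ler_wpM2l //.
  - apply: le_trans (lebint_scale k0 (Gi0 w)).
    apply: lebint_mono => // z; rewrite /Gi; case: asboolP => hz.
      by rewrite mule0.
    have [p1 p2 c1 c2] := Lp y z hy hz.
    rewrite !levy_dens_pos // -EFinM lee_fin mulrCA ler_wpM2l //.
have gw_fin : (lebint (Gi w) < +oo)%E.
  set mr := Num.min r 1.
  have mr0 : 0 < mr by rewrite lt_min r0 ltr01.
  set k := Num.bound (tnorm w / mr).
  have hk : tnorm w / mr < k%:R.
    by apply: archi_boundP; rewrite divr_ge0 ?tnorm_ge0 // ltW.
  have hk' : tnorm w <= k%:R * mr.
    by rewrite -ler_pdivrMr //; apply: ltW.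
  set A := 1 + `|a1| ^+ k.
  have A0 : 0 <= `|a1| ^+ k by rewrite exprn_ge0.
  set K' := A + nu r.
  have nr0 : 0 <= nu r by apply: nu0.
  have K'0 : 0 <= K' by rewrite /K' /A; lra.
  apply: le_lt_trans (_ : (lebint (fun z => K'%:E * (f z * Num.min (levy_dens nu z) 1)%:E) < _)%E).
    apply: lebint_mono0 => //.
      by move=> z; rewrite mule_ge0 // lee_fin mulr_ge0 // le_min levy_dens_ge0 // ler01.
    move=> z z0; rewrite /Gi; case: asboolP => hz.
      by rewrite mule_ge0 // lee_fin mulr_ge0 // le_min levy_dens_ge0 // ler01.
    have ha : r <= tnorm (tsub w z).
      rewrite tnorm_subC leNgt; apply/negP => H; exact: hz H.
    set s := tnorm (tsub w z) in ha *.
    have s0 : 0 < s by lra.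
    have zp : 0 < tnorm z.
      rewrite lt_neqAle tnorm_ge0 andbT; apply/eqP => H.
      by move/eqP: z0; apply; apply: tnorm_eq0.
    rewrite (levy_dens_pos _ s0) (levy_dens_pos _ zp) -EFinM lee_fin.
    have hz' : tnorm z <= s + tnorm w.
      have := @tnorm_tri R d.+1 z w (tzero R d.+1).
      by rewrite !tsub0 (tnorm_subC z w).
    have B1 : nu s <= A * nu (tnorm z).
      have nz := nu0 _ zp.
      case: (leP (tnorm z) s) => zs.
        by apply: le_trans (numono _ _ zp zs) _; rewrite /A; nra.
      have : nu s <= `|a1| ^+ k * nu (tnorm z).
        apply: (@chainT R nu a1) => //; first exact: ltW.
        have : mr <= mm s by rewrite /mm /mr le_min !ge_min ha lexx orbT /=.
        have kk : 0 <= (k%:R : R) by [].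
        nra.
      rewrite /A; nra.
    have B2 : nu s <= nu r by apply: numono.
    have nz := nu0 _ zp.
    rewrite mulrCA; apply: ler_wpM2l => //.
    rewrite -/s.
    case: (leP (nu (tnorm z)) 1) => h1.
      have := mulr_ge0 nr0 nz; move: B1; rewrite /K' /A; nra.
    rewrite mulr1 /K' /A; move: B2; have := mulr_ge0 nr0 nz; lra.
  apply: le_lt_trans (lebint_scale K'0 _) _.
    by move=> z; rewrite lee_fin mulr_ge0 // le_min levy_dens_ge0 // ler01.
  by rewrite lte_mul_pinfty.
have gw0 : (0 <= lebint (Gi w))%E by apply: lebint_ge0.
have gwE : lebint (Gi w) = (fine (lebint (Gi w)))%:E.
  by rewrite fineK // ge0_fin_numE.
set G0 := fine (lebint (Gi w)) in gwE.
have G00 : 0 <= G0 by rewrite -lee_fin -gwE.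
have gyE : forall y, eball w (r / 2) y -> lebint (Gi y) = (fine (lebint (Gi y)))%:E.
  move=> y hy; rewrite fineK // ge0_fin_numE ?lebint_ge0 //.
  apply: le_lt_trans (cmp y hy).2 _; rewrite gwE -EFinM ltry //.
have Dle : forall y, eball w (r / 2) y -> tnorm (tsub y w) / r <= 1 / 2.
  move=> y hy; rewrite ler_pdivrMr // mulrC mulrA mulr1.
  have : tnorm (tsub y w) < r / 2 by exact: hy.
  lra.
split.
- exists ((1 + K8 / 2) * G0) => y hy; rewrite GE.
  apply: le_trans (cmp y hy).2 _; rewrite gwE -EFinM lee_fin.
  apply: ler_wpM2r => //; rewrite lerD2l.
  have := Dle y hy; rewrite -mulrA; move=> H.
  have -> : K8 / 2 = K8 * (1 / 2) by rewrite mul1r.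
  by apply: ler_wpM2l.
- move=> y hy; rewrite !GE (gyE y hy) gwE.
  set G1 := fine (lebint (Gi y)).
  have G10 : 0 <= G1 by rewrite -lee_fin -(gyE y hy) lebint_ge0.
  have [c1 c2] := cmp y hy; rewrite (gyE y hy) gwE -!EFinM !lee_fin -/G1 in c1 c2.
  rewrite -EFinB abse_EFin -EFin_min -!EFinM lee_fin.
  set t := tnorm (tsub y w) / r.
  have t0 : 0 <= t by rewrite divr_ge0 ?tnorm_ge0 // ltW.
  have E : K8 * tnorm (tsub y w) / r = K8 * t by rewrite /t mulrA.
  rewrite E in c1 c2.
  case: (leP G0 G1) => h.
    rewrite ger0_norm; last lra.
    nra.
  rewrite ler0_norm; last lra.
  nra.
- move=> y hy; rewrite !GE (gyE y hy) gwE.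
  have [c1 c2] := cmp y hy; rewrite (gyE y hy) gwE -!EFinM !lee_fin in c1 c2.
  rewrite -EFinM lee_fin.
  set G1 := fine (lebint (Gi y)) in c1 c2 *.
  have G10 : 0 <= G1 by rewrite -lee_fin -(gyE y hy) lebint_ge0.
  apply: le_trans c1 _; apply: ler_wpM2r => //; rewrite lerD2l.
  have := Dle y hy; rewrite -mulrA => H.
  rewrite -[X in _ <= X]mulr1; apply: ler_wpM2l => //; lra.
Qed.
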